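(* Let $\tau\subset\mathbb{Z}^4_{\ge0}$ be a B-facet which has an internal V-face consisting of exactly three (affinely independent) points. Then $\tau$ is a $B_1$-facet, or a $B_2$-facet, or the standard cross-polytope $\{(1,1,0,0),(1,0,1,0),(1,0,0,1),(0,1,1,0),(0,1,0,1),(0,0,1,1)\}$.
   Context: A polytope is a finite subset of $\mathbb{Z}^n$; its dimension is the dimension of its affine span; a face of a finite set $S$ is $S\cap G$ for a face $G$ of the convex hull of $S$. A $k$-simplex is a set of $k+1$ affinely independent points; a $k$-simplex $S\subset\mathbb{Z}^n_{\ge0}$ is a B-simplex if there is an index $i$ with exactly $k$ vertices in $\{x_i=0\}$ and the remaining vertex having $x_i=1$. A B-facet in $\mathbb{Z}^n_{\ge0}$ is a finite set $\tau\subset\mathbb{Z}^n_{\ge0}$ whose affine span is a hyperplane $\{\langle a,x\rangle=b\}$ with all $a_j>0$, such that every $(n-1)$-simplex with vertices in $\tau$ is a B-simplex. A face $F$ of $\tau$ is a V-face if it is contained in a coordinate subspace (linear span of some standard basis vectors) of dimension $\dim F+1$; a V-face $F$ is internal if no nonempty proper face of $F$ is a V-face. $\tau\subset\mathbb{Z}^4_{\ge0}$ is a $B_1$-facet if there is an index $i$ such that exactly one point of $\tau$ has nonzero $x_i$, and it has $x_i=1$; it is a $B_2$-facet if there are distinct indices $i,j$ with $(x_i,x_j)\in\{(0,0),(1,0),(0,1)\}$ for all $x\in\tau$. *)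

(* Defs.v *)
From HB Require Import structures.
From mathcomp Require Import all_boot all_order all_algebra.
From mathcomp Require Import finmap.
From mathcomp Require Import reals.
Set Implicit Arguments. Unset Strict Implicit. Unset Printing Implicit Defensive.
Import Order.TTheory GRing.Theory Num.Theory.
Local Open Scope ring_scope.
Local Open Scope fset_scope.

Definition pt (n : nat) := {ffun 'I_n -> nat}.

Section Geometry.
Variables (R : realType) (n : nat).

Definition coord (x : pt n) (i : 'I_n) : R := ((x i)%:R : R).

Definition dotp (c : 'I_n -> R) (x : pt n) : R := \sum_(i < n) c i * coord x i.

Definition aff_indep (A : {fset pt n}) : Prop :=
  forall l : pt n -> R,
    \sum_(x <- A) l x = 0 ->
    (forall i, \sum_(x <- A) l x * coord x i = 0) ->
    forall x, x \in A -> l x = 0.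

Definition in_aff_span (A : {fset pt n}) (y : 'I_n -> R) : Prop :=
  exists l : pt n -> R,
    \sum_(x <- A) l x = 1 /\ forall i, y i = \sum_(x <- A) l x * coord x i.

Definition has_dim (A : {fset pt n}) (k : nat) : Prop :=
  (exists2 B : {fset pt n}, B `<=` A & aff_indep B /\ #|` B| = k.+1) /\
  (forall B : {fset pt n}, B `<=` A -> aff_indep B -> (#|` B| <= k.+1)%N).

Definition simplex (S : {fset pt n}) (k : nat) : Prop :=
  aff_indep S /\ #|` S| = k.+1.

Definition B_simplex (S : {fset pt n}) (k : nat) : Prop :=
  simplex S k /\
  exists i : 'I_n,
    #|` [fset x in S | x i == 0%N]| = k /\
    forall x, x \in S -> x i != 0%N -> x i = 1%N.

Definition B_facet (tau : {fset pt n}) : Prop :=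
  (exists (a : 'I_n -> R) (b : R),
      (forall j, 0 < a j) /\
      forall y : 'I_n -> R, in_aff_span tau y <-> \sum_(j < n) a j * y j = b) /\
  (forall S : {fset pt n}, S `<=` tau -> simplex S n.-1 -> B_simplex S n.-1).

(* F is a face of the finite set S: F = S \cap G for a face G of conv(S);
   faces of a polytope are its intersections with supporting hyperplanes
   <c,x> = d (c = 0 allowed, giving the whole polytope / the empty face). *)
Definition is_face (S F : {fset pt n}) : Prop :=
  exists (c : 'I_n -> R) (d : R),
    (forall x, x \in S -> dotp c x <= d) /\
    F = [fset x in S | dotp c x == d].

Definition is_Vface (tau F : {fset pt n}) : Prop :=
  is_face tau F /\
  exists k : nat, has_dim F k /\
    exists J : {set 'I_n}, #|J| = k.+1 /\
      forall x, x \in F -> forall i, i \notin J -> x i = 0%N.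

Definition is_internal_Vface (tau F : {fset pt n}) : Prop :=
  is_Vface tau F /\
  forall G : {fset pt n}, is_face F G -> G != fset0 -> G != F -> ~ is_Vface tau G.

End Geometry.

Definition B1_facet (tau : {fset pt 4}) : Prop :=
  exists i : 'I_4, exists2 v, v \in tau &
    v i = 1%N /\ forall x, x \in tau -> x != v -> x i = 0%N.

Definition B2_facet (tau : {fset pt 4}) : Prop :=
  exists i j : 'I_4, i != j /\
    forall x, x \in tau ->
      (x i, x j) \in [:: (0, 0); (1, 0); (0, 1)]%N.

Definition mkpt4 (a b c d : nat) : pt 4 :=
  [ffun i : 'I_4 => nth 0%N [:: a; b; c; d] i].

Definition cross_polytope : {fset pt 4} :=
  [fset mkpt4 1 1 0 0; mkpt4 1 0 1 0; mkpt4 1 0 0 1;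
        mkpt4 0 1 1 0; mkpt4 0 1 0 1; mkpt4 0 0 1 1].

(* Main.v *)
Require Import Defs.
From HB Require Import structures.
From mathcomp Require Import all_boot all_order all_algebra.
From mathcomp Require Import finmap.
From mathcomp Require Import reals.
From mathcomp Require Import ring lra zify.
From Stdlib Require Import Classical.
Set Implicit Arguments. Unset Strict Implicit. Unset Printing Implicit Defensive.
Import Order.TTheory GRing.Theory Num.Theory.
Local Open Scope fset_scope.
Local Open Scope ring_scope.

Lemma four_cover (i j k l x : 'I_4) : i != j -> i != k -> i != l -> j != k -> j != l -> k != l ->
  [|| x == i, x == j, x == k | x == l].
Proof.
move=> ij ik il jk jl kl; apply/negPn/negP => H.
have : (#|(x |: (i |: (j |: (k |: [set l]))))| <= 4)%N.
  by have := max_card (x |: (i |: (j |: (k |: [set l])))); rewrite card_ord.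
rewrite !cardsU1 cards1 !inE.
move: H; rewrite !negb_or => /and4P[xi xj xk xl].
by rewrite xi xj xk xl ij ik il jk jl kl.
Qed.

Definition O0 : 'I_4 := @Ordinal 4 0 isT.
Definition O1 : 'I_4 := @Ordinal 4 1 isT.
Definition O2 : 'I_4 := @Ordinal 4 2 isT.
Definition O3 : 'I_4 := @Ordinal 4 3 isT.

Ltac try1 := solve [exists O0; by [] | exists O1; by [] | exists O2; by [] | exists O3; by []].
Ltac try2 := solve [exists O0; try1 | exists O1; try1 | exists O2; try1 | exists O3; try1].

Lemma two_others (l m : 'I_4) : l != m ->
  exists j k : 'I_4, [/\ j != k, j != l, j != m, k != l & k != m].
Proof.
by case: l => [[|[|[|[|?]]]] Hl] //; case: m => [[|[|[|[|?]]]] Hm] //= _; try2.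
Qed.

Lemma one_other (l m j : 'I_4) : l != m -> l != j -> m != j ->
  exists k : 'I_4, [/\ k != l, k != m & k != j].
Proof.
by case: l => [[|[|[|[|?]]]] Hl] //; case: m => [[|[|[|[|?]]]] Hm] //;
  case: j => [[|[|[|[|?]]]] Hj] //= _ _ _; try1.
Qed.

Lemma big4 (T : Type) (idx : T) (op : Monoid.com_law idx) (f : 'I_4 -> T) (i j k l : 'I_4) :
  i != j -> i != k -> i != l -> j != k -> j != l -> k != l ->
  \big[op/idx]_m f m = op (f i) (op (f j) (op (f k) (f l))).
Proof.
move=> ij ik il jk jl kl.
rewrite (perm_big [:: i; j; k; l]) ?big_cons ?big_nil ?Monoid.mulm1 //.
apply: uniq_perm; first exact: index_enum_uniq.
  by rewrite /= !inE !negb_or ij ik il jk jl kl.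
by move=> x; rewrite mem_index_enum !inE four_cover.
Qed.

Definition S2 (x y : pt 4) : {fset pt 4} := x |` [fset y].
Definition S3 (x y z : pt 4) : {fset pt 4} := x |` S2 y z.
Definition S4 (x y z t : pt 4) : {fset pt 4} := x |` S3 y z t.

Lemma inS2 t x y : (t \in S2 x y) = (t == x) || (t == y).
Proof. by rewrite !inE. Qed.
Lemma inS3 t x y z : (t \in S3 x y z) = [|| t == x, t == y | t == z].
Proof. by rewrite !inE. Qed.
Lemma inS4 t x y z s : (t \in S4 x y z s) = [|| t == x, t == y, t == z | t == s].
Proof. by rewrite !inE. Qed.

Section BigS.
Variables (T : Type) (idx : T) (op : Monoid.com_law idx).
Lemma big_S2 (f : pt 4 -> T) x y : x != y -> \big[op/idx]_(t <- S2 x y) f t = op (f x) (f y).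
Proof. by move=> xy; rewrite /S2 big_fsetU1 ?big_seq_fset1 // inE. Qed.
Lemma big_S3 (f : pt 4 -> T) x y z : x != y -> x != z -> y != z ->
  \big[op/idx]_(t <- S3 x y z) f t = op (f x) (op (f y) (f z)).
Proof. by move=> xy xz yz; rewrite /S3 big_fsetU1 ?big_S2 // inS2 negb_or xy xz. Qed.
Lemma big_S4 (f : pt 4 -> T) x y z s : x != y -> x != z -> x != s -> y != z -> y != s -> z != s ->
  \big[op/idx]_(t <- S4 x y z s) f t = op (f x) (op (f y) (op (f z) (f s))).
Proof. by move=> *; rewrite /S4 big_fsetU1 ?big_S3 // inS3 !negb_or; apply/and3P. Qed.
End BigS.

Lemma card_filt4 (P : pred (pt 4)) x y z s : x != y -> x != z -> x != s -> y != z -> y != s -> z != s ->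
  #|` [fset t in S4 x y z s | P t]| = (P x + P y + P z + P s)%N.
Proof.
move=> *; rewrite card_fset_sum1 -big_fset_condE big_mkcond big_S4 //=.
by case: (P x); case: (P y); case: (P z); case: (P s).
Qed.

Lemma card_S4 x y z s : x != y -> x != z -> x != s -> y != z -> y != s -> z != s ->
  #|` S4 x y z s| = 4%N.
Proof.
move=> xy xz xs yz ys zs.
rewrite /S4 /S3 /S2 !cardfsU1 cardfs1 !inE.
by rewrite (negbTE zs) (negbTE yz) (negbTE ys) (negbTE xy) (negbTE xz) (negbTE xs).
Qed.

Section Real.
Variable R : realType.
Local Notation crd := (Defs.coord R).

Lemma crd_ge0 (x : pt 4) i : 0 <= crd x i.
Proof. by rewrite /Defs.coord ler0n. Qed.

Lemma crd_eq0 (x : pt 4) i : (crd x i == 0) = (x i == 0%N).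
Proof. by rewrite /Defs.coord pnatr_eq0. Qed.

Lemma crd_inj (x y : pt 4) : (forall i, crd x i = crd y i) -> x = y.
Proof.
move=> H; apply/ffunP => i; apply/eqP; rewrite -(eqr_nat R); apply/eqP; exact: H.
Qed.

Lemma sum4 (f : 'I_4 -> R) (i j k l : 'I_4) :
  i != j -> i != k -> i != l -> j != k -> j != l -> k != l ->
  \sum_m f m = f i + f j + f k + f l.
Proof. by move=> *; rewrite (@big4 _ _ _ f i j k l) //= !addrA. Qed.

Lemma ai3P x y z : x != y -> x != z -> y != z -> aff_indep R (S3 x y z) ->
  forall l1 l2 l3 : R, l1 + l2 + l3 = 0 ->
  (forall i, l1 * crd x i + l2 * crd y i + l3 * crd z i = 0) ->
  [/\ l1 = 0, l2 = 0 & l3 = 0].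
Proof.
move=> xy xz yz H l1 l2 l3 s0 c0.
pose lf t := if t == x then l1 else if t == y then l2 else l3.
have yx : (y == x) = false by rewrite eq_sym (negbTE xy).
have zx : (z == x) = false by rewrite eq_sym (negbTE xz).
have zy : (z == y) = false by rewrite eq_sym (negbTE yz).
have H2 := H lf.
have E1 : \sum_(t <- S3 x y z) lf t = 0.
  by rewrite big_S3 //= /lf eqxx yx zx zy eqxx addrA.
have E2 : forall i, \sum_(t <- S3 x y z) lf t * crd t i = 0.
  by move=> i; rewrite big_S3 //= /lf eqxx yx zx zy eqxx addrA.
have := H2 E1 E2.
move=> Hl; split.
- by have := Hl x; rewrite inS3 eqxx /lf eqxx => ->.
- by have := Hl y; rewrite inS3 eqxx orbT /lf yx eqxx => ->.
- by have := Hl z; rewrite inS3 eqxx !orbT /lf zx zy => ->.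
Qed.

Lemma ai4I x y z s : x != y -> x != z -> x != s -> y != z -> y != s -> z != s ->
  (forall l1 l2 l3 l4 : R, l1 + l2 + l3 + l4 = 0 ->
    (forall i, l1 * crd x i + l2 * crd y i + l3 * crd z i + l4 * crd s i = 0) ->
    [/\ l1 = 0, l2 = 0, l3 = 0 & l4 = 0]) ->
  aff_indep R (S4 x y z s).
Proof.
move=> xy xz xs yz ys zs H lf E1 E2.
rewrite big_S4 //= !addrA in E1.
have E2' : forall i, lf x * crd x i + lf y * crd y i + lf z * crd z i + lf s * crd s i = 0.
  by move=> i; have := E2 i; rewrite big_S4 //= !addrA.
have [h1 h2 h3 h4] := H _ _ _ _ E1 E2'.
by move=> t; rewrite inS4 => /or4P[] /eqP ->.
Qed.

Lemma ai2I x y : x != y -> aff_indep R (S2 x y).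
Proof.
move=> xy lf E1 E2.
rewrite big_S2 //= in E1.
have [i Hi] : exists i, crd x i != crd y i.
  apply/existsP; apply: contraR xy => /existsPn H.
  by apply/eqP/crd_inj => i; apply/eqP; have := H i; rewrite negbK.
have := E2 i; rewrite big_S2 //=.
have ey : lf y = - lf x by apply/eqP; rewrite -subr_eq0 opprK addrC E1.
rewrite ey mulNr => E3.
have : lf x * (crd x i - crd y i) = 0 by rewrite mulrBr E3.
move/eqP; rewrite mulf_eq0 subr_eq0 (negbTE Hi) orbF => /eqP ex.
by move=> t; rewrite inS2 => /orP[] /eqP ->; rewrite ?ey ex ?oppr0.
Qed.

Lemma ai1I (x : pt 4) : aff_indep R [fset x].
Proof.
move=> lf E1 E2 t; rewrite inE => /eqP ->.
by rewrite big_seq_fset1 in E1.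
Qed.

Lemma hd2 x y : x != y -> has_dim R (S2 x y) 1.
Proof.
move=> xy; split.
  exists (S2 x y) => //; split; first exact: ai2I.
  by rewrite /S2 cardfsU1 cardfs1 inE xy.
move=> B /fsubset_leq_card HB _; apply: (leq_trans HB).
by rewrite /S2 cardfsU1 cardfs1 inE xy.
Qed.

Lemma hd1 (x : pt 4) : has_dim R [fset x] 0.
Proof.
split.
  by exists [fset x] => //; split; [exact: ai1I | rewrite cardfs1].
by move=> B /fsubset_leq_card HB _; rewrite (leq_trans HB) // cardfs1.
Qed.

Lemma span4 (M : 'M[R]_4) : (forall x : 'rV_4, x *m M = 0 -> x = 0) ->
  forall y : 'rV_4, exists x, y = x *m M.
Proof.
move=> H y.
have fr : row_free M.
  rewrite -kermx_eq0; apply/eqP/row_matrixP => i; rewrite row0; apply: H.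
  by rewrite -row_mul mulmx_ker row0.
move: fr; rewrite row_free_unit => uM.
by exists (y *m invmx M); rewrite mulmxKV.
Qed.

End Real.

Lemma in_filt (A : {fset pt 4}) (P : pred (pt 4)) x : (x \in [fset t in A | P t]) = (x \in A) && P x.
Proof. by rewrite !inE. Qed.

Section Real2.
Variable R : realType.
Lemma crd_neq (x y : pt 4) : x != y -> exists i, Defs.coord R x i != Defs.coord R y i.
Proof.
move=> xy; apply/existsP; apply: contraR xy => /existsPn H.
by apply/eqP/(@crd_inj R) => i; apply/eqP; have := H i; rewrite negbK.
Qed.
Lemma crd_val (x : pt 4) i n : x i = n -> Defs.coord R x i = n%:R.
Proof. by rewrite /Defs.coord => ->. Qed.
End Real2.

Lemma S4_swap x y p q : S4 x y p q = S4 y x p q.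
Proof. by apply/fsetP => t; rewrite !inS4; case: (t == x); case: (t == y). Qed.

Lemma crd_nat (R : realType) (x : pt 4) i n : Defs.coord R x i = n%:R -> x i = n.
Proof. by rewrite /Defs.coord => /eqP; rewrite eqr_nat => /eqP. Qed.

Lemma cardU1_leS (A : {fset pt 4}) x n : (#|` A| <= n)%N -> (#|` A `|` [fset x]| <= n.+1)%N.
Proof.
move=> H; rewrite cardfsU cardfs1; apply: leq_trans (leq_subr _ _) _.
by rewrite addn1.
Qed.

Lemma cross_card : (#|` cross_polytope| <= 6)%N.
Proof. by rewrite /cross_polytope; do 5! apply: cardU1_leS; rewrite cardfs1. Qed.

Lemma cross_mem (t : pt 4) i j k l : i != j -> i != k -> i != l -> j != k -> j != l -> k != l ->
  (t i <= 1)%N -> (t j <= 1)%N -> (t k <= 1)%N -> (t l <= 1)%N ->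
  (t i + t j + t k + t l = 2)%N -> t \in cross_polytope.
Proof.
move=> ij ik il jk jl kl hi hj hk hl hs.
have H : forall m, (t m <= 1)%N.
  by move=> m; have := four_cover m ij ik il jk jl kl; case/or4P => /eqP ->.
have O01 : O0 != O1 by []. have O02 : O0 != O2 by []. have O03 : O0 != O3 by [].
have O12 : O1 != O2 by []. have O13 : O1 != O3 by []. have O23 : O2 != O3 by [].
have E1 : (\sum_(m < 4) t m = t i + (t j + (t k + t l)))%N.
  by rewrite (@big4 _ _ _ (fun m => t m) i j k l).
have E2 : (\sum_(m < 4) t m = t O0 + (t O1 + (t O2 + t O3)))%N.
  by rewrite (@big4 _ _ _ (fun m => t m) O0 O1 O2 O3).
have S : (t O0 + t O1 + t O2 + t O3 = 2)%N.
  by rewrite -!addnA -E2 E1 !addnA.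
have Et : t = mkpt4 (t O0) (t O1) (t O2) (t O3).
  apply/ffunP => m; rewrite ffunE.
  by have := four_cover m O01 O02 O03 O12 O13 O23; case/or4P => /eqP ->.
have b01 : forall m, t m = 0%N \/ t m = 1%N.
  by move=> m; have := H m; case: (t m) => [|[|?]] //; auto.
rewrite Et; move: S.
case: (b01 O0) => ->; case: (b01 O1) => ->; case: (b01 O2) => ->; case: (b01 O3) => -> //= _;
  by rewrite /cross_polytope !inE eqxx ?orbT.
Qed.

Lemma card3 (A : {fset pt 4}) : #|` A| = 3%N ->
  exists u v w, [/\ A = S3 u v w, u != v, u != w & v != w].
Proof.
move=> cA.
have [u uA] : exists u, u \in A.
  by apply/fset0Pn; rewrite -cardfs_gt0 cA.
have c1 : #|` A `\ u| = 2%N by move: cA; rewrite (cardfsD1 u A) uA => -[].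
have [v vA] : exists v, v \in A `\ u.
  by apply/fset0Pn; rewrite -cardfs_gt0 c1.
have c2 : #|` (A `\ u) `\ v| = 1%N by move: c1; rewrite (cardfsD1 v (A `\ u)) vA => -[].
have /cardfs1P [w Ew] : #|` (A `\ u) `\ v| == 1%N by rewrite c2.
have wA : w \in (A `\ u) `\ v by rewrite Ew inE.
move: (vA) (wA); rewrite !inE => /andP[vu _] /andP[wv /andP[wu _]].
exists u, v, w; split; first by rewrite /S3 /S2 -Ew !fsetD1K.
- by rewrite eq_sym.
- by rewrite eq_sym.
- by rewrite eq_sym.
Qed.

Section Main.
Variable R : realType.
Local Notation crd := (Defs.coord R).
Variable tau : {fset pt 4}.
Variables (a : 'I_4 -> R) (b : R).
Hypothesis apos : forall j, 0 < a j.
Hypothesis hyp : forall y : 'I_4 -> R, in_aff_span tau y <-> \sum_(j < 4) a j * y j = b.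
Hypothesis SC : forall S : {fset pt 4}, S `<=` tau -> simplex R S 3 -> B_simplex R S 3.
Variables u v w : pt 4.
Hypotheses (uv : u != v) (uw : u != w) (vw : v != w).
Local Notation F := (S3 u v w).
Variables (cF : 'I_4 -> R) (dF : R).
Hypothesis cF_le : forall x, x \in tau -> dotp cF x <= dF.
Hypothesis F_eq : F = [fset x in tau | dotp cF x == dF].
Variable l : 'I_4.
Hypothesis Fl : forall x, x \in F -> x l = 0%N.
Hypothesis Fai : aff_indep R F.
Hypothesis internal : forall G : {fset pt 4},
  is_face R F G -> G != fset0 -> G != F -> ~ is_Vface R tau G.

Lemma memF x : (x \in F) = (x \in tau) && (dotp cF x == dF).
Proof. by rewrite [in LHS]F_eq !inE. Qed.

Lemma F_tau x : x \in F -> x \in tau.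
Proof. by rewrite memF => /andP[]. Qed.

Lemma F_dot x : x \in F -> dotp cF x = dF.
Proof. by rewrite memF => /andP[_ /eqP]. Qed.

Lemma onH x : x \in tau -> dotp a x = b.
Proof.
move=> xt; apply/hyp; exists (fun t => ((t == x)%:R : R)); split.
  rewrite (big_fsetD1 x) //= eqxx big1_fset ?addr0 // => t.
  by rewrite !inE => /andP[/negbTE -> _].
move=> i; rewrite (big_fsetD1 x) //= eqxx mul1r big1_fset ?addr0 // => t.
by rewrite !inE => /andP[/negbTE -> _]; rewrite mul0r.
Qed.

Lemma dot_split (c1 c2 : 'I_4 -> R) x : dotp (fun i => c1 i + c2 i) x = dotp c1 x + dotp c2 x.
Proof. by rewrite /dotp -big_split; apply: eq_bigr => i _; rewrite mulrDl. Qed.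

Lemma uF : u \in F. Proof. by rewrite inS3 eqxx. Qed.
Lemma vF : v \in F. Proof. by rewrite inS3 eqxx orbT. Qed.
Lemma wF : w \in F. Proof. by rewrite inS3 eqxx !orbT. Qed.

Lemma bpos : 0 < b.
Proof.
have Hu := onH (F_tau uF); have Hv := onH (F_tau vF).
have ge : forall x, 0 <= dotp a x.
  move=> x; apply: sumr_ge0 => i _; apply: mulr_ge0; [exact: ltW | exact: crd_ge0].
rewrite lt_def -Hu ge andbT; apply/eqP => b0.
have z : forall x, dotp a x = 0 -> forall i, crd x i = 0.
  move=> x H i.
  have H2 : a i * crd x i = 0.
    apply: (@psumr_eq0P _ _ _ (fun i => a i * crd x i) _ H i isT).
    by move=> k _; apply: mulr_ge0; [exact: ltW | exact: crd_ge0].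
  by move/eqP: H2; rewrite mulf_eq0 (negbTE (lt0r_neq0 (apos i))) /= => /eqP.
move: uv; apply/negP; rewrite negbK; apply/eqP/(@crd_inj R) => i.
by rewrite (z u b0 i) (z v _ i) // Hv -Hu b0.
Qed.

Definition trip x y z := [/\ x \in F, y \in F, z \in F & [/\ x != y, x != z & y != z]].

Lemma trip_F x y z : trip x y z -> F = S3 x y z.
Proof.
case=> xF yF zF [xy xz yz]; apply/fsetP => t; rewrite !inS3.
move: xF yF zF xy xz yz; rewrite !inS3.
case/or3P=> /eqP-> ; case/or3P=> /eqP->; case/or3P=> /eqP->;
  rewrite ?eqxx //= => _ _ _;
  by case: (t == u); case: (t == v); case: (t == w).
Qed.

Lemma trip_uvw : trip u v w.
Proof. by split; [exact: uF | exact: vF | exact: wF | split]. Qed.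

Lemma trip_sym12 x y z : trip x y z -> trip y x z.
Proof. by case=> ? ? ? [? ? ?]; split => //; split => //; rewrite eq_sym. Qed.
Lemma trip_sym23 x y z : trip x y z -> trip x z y.
Proof. by case=> ? ? ? [? ? ?]; split => //; split => //; rewrite eq_sym. Qed.

Lemma third x y : x \in F -> y \in F -> x != y -> exists z, trip x y z.
Proof.
have vu : v != u by rewrite eq_sym. have wu : w != u by rewrite eq_sym.
have wv : w != v by rewrite eq_sym.
rewrite !inS3 => /or3P[] /eqP-> /or3P[] /eqP-> //; rewrite ?eqxx // => _.
- by exists w; split; rewrite ?inS3 ?eqxx ?orbT //; split.
- by exists v; split; rewrite ?inS3 ?eqxx ?orbT //; split.
- by exists w; split; rewrite ?inS3 ?eqxx ?orbT //; split.
- by exists u; split; rewrite ?inS3 ?eqxx ?orbT //; split.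
- by exists v; split; rewrite ?inS3 ?eqxx ?orbT //; split.
- by exists u; split; rewrite ?inS3 ?eqxx ?orbT //; split.
Qed.

Lemma others x : x \in F -> exists y z, trip x y z.
Proof.
move=> xF; have [y [yF xy]] : exists y, y \in F /\ x != y.
  move: xF; rewrite inS3 => /or3P[] /eqP->.
  - by exists v; rewrite vF.
  - by exists u; rewrite uF eq_sym.
  - by exists u; rewrite uF eq_sym.
by have [z Hz] := third xF yF xy; exists y, z.
Qed.

Lemma ai3F x y z : trip x y z ->
  forall l1 l2 l3 : R, l1 + l2 + l3 = 0 ->
  (forall i, l1 * crd x i + l2 * crd y i + l3 * crd z i = 0) ->
  [/\ l1 = 0, l2 = 0 & l3 = 0].
Proof.
move=> T; have := Fai; rewrite (trip_F T); case: T => _ _ _ [xy xz yz].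
exact: ai3P.
Qed.


Lemma dot_le0 (c : 'I_4 -> R) x : (forall i, c i <= 0) -> dotp c x <= 0.
Proof. move=> H; apply: sumr_le0 => i _; apply: mulr_le0_ge0 => //; exact: crd_ge0. Qed.

Lemma face_lemma (c : 'I_4 -> R) : (forall i, c i <= 0) ->
  is_face R F [fset x in F | dotp c x == 0] /\ is_face R tau [fset x in F | dotp c x == 0].
Proof.
move=> H; split.
  by exists c, 0; split => // x _; exact: dot_le0.
exists (fun i => cF i + c i), dF; split.
  move=> x xt; rewrite dot_split; have := cF_le xt; have := dot_le0 x H; lra.
apply/fsetP => x; rewrite !in_filt memF dot_split.
case xt: (x \in tau) => //=.
have h1 := cF_le xt; have h2 := dot_le0 x H.
apply/andP/eqP => [[/eqP -> /eqP ->]|E]; first by rewrite addr0.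
split; apply/eqP; lra.
Qed.

Definition cneg (m : 'I_4) : 'I_4 -> R := fun i => - ((i == m)%:R).
Lemma cneg_le0 m i : cneg m i <= 0. Proof. by rewrite /cneg oppr_le0 ler0n. Qed.
Lemma dot_cneg m x : dotp (cneg m) x = - crd x m.
Proof.
rewrite /dotp (bigD1 m) //= big1 => [|i /negbTE im]; first by rewrite /cneg eqxx mulN1r addr0.
by rewrite /cneg im oppr0 mul0r.
Qed.
Lemma cneg_eq0 m x : (dotp (cneg m) x == 0) = (x m == 0%N).
Proof. by rewrite dot_cneg oppr_eq0 crd_eq0. Qed.
Definition cneg2 m m' : 'I_4 -> R := fun i => cneg m i + cneg m' i.
Lemma cneg2_le0 m m' i : cneg2 m m' i <= 0.
Proof. by rewrite /cneg2; have := cneg_le0 m i; have := cneg_le0 m' i; lra. Qed.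
Lemma cneg2_eq0 m m' x : (dotp (cneg2 m m') x == 0) = (x m == 0%N) && (x m' == 0%N).
Proof. by rewrite /cneg2 dot_split !dot_cneg -opprD oppr_eq0 paddr_eq0 ?crd_ge0 // !crd_eq0. Qed.

Lemma cl t : t \in F -> crd t l = 0.
Proof. by move=> tF; rewrite /Defs.coord Fl. Qed.

Lemma Fzero m : m != l -> (forall t, t \in F -> t m = 0%N) -> False.
Proof.
move=> ml Hz.
have lm : l != m by rewrite eq_sym.
have [j [k [jk jl jm kl km]]] := two_others lm.
have lj : l != j by rewrite eq_sym. have lk : l != k by rewrite eq_sym.
have mj : m != j by rewrite eq_sym. have mk : m != k by rewrite eq_sym.
have cm : forall t, t \in F -> crd t m = 0 by move=> t tF; rewrite /Defs.coord Hz.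
have Hd : forall t, t \in F -> a j * crd t j + a k * crd t k = b.
  move=> t tF; rewrite -(onH (F_tau tF)) /dotp (sum4 _ lm lj lk mj mk jk) (cl tF) (cm t tF).
  by rewrite !mulr0 !add0r.
have akn : a k != 0 by apply: lt0r_neq0.
have Ek : forall t, t \in F -> crd t k = (b - a j * crd t j) / a k.
  by move=> t tF; rewrite -(Hd t tF); field.
have Hs : (crd v j - crd w j) + (crd w j - crd u j) + (crd u j - crd v j) = 0 by ring.
have Hc : forall i, (crd v j - crd w j) * crd u i + (crd w j - crd u j) * crd v i
     + (crd u j - crd v j) * crd w i = 0.
  move=> i; have := four_cover i lm lj lk mj mk jk.
  case/or4P => /eqP ->.
  - by rewrite (cl uF) (cl vF) (cl wF); ring.
  - by rewrite (cm u uF) (cm v vF) (cm w wF); ring.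
  - ring.
  - by rewrite (Ek u uF) (Ek v vF) (Ek w wF); field.
have [_ _ h3] := ai3F trip_uvw Hs Hc.
have ej : crd u j = crd v j by apply/eqP; rewrite -subr_eq0 h3.
move/negP: uv; apply; apply/eqP/(@crd_inj R) => i.
have := four_cover i lm lj lk mj mk jk; case/or4P => /eqP ->.
- by rewrite (cl uF) (cl vF).
- by rewrite (cm u uF) (cm v vF).
- exact: ej.
- by rewrite (Ek u uF) (Ek v vF) ej.
Qed.

Lemma I2 x y m : x \in F -> y \in F -> x != y -> m != l -> x m = 0%N -> y m = 0%N -> False.
Proof.
move=> xF yF xy ml xm ym.
have [z T] := third xF yF xy.
have zm : z m != 0%N.
  apply/negP => /eqP zm; apply: (Fzero ml) => t; rewrite (trip_F T) inS3.
  by case/or3P => /eqP ->.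
have lm : l != m by rewrite eq_sym.
have [j [k [jk jl jm kl km]]] := two_others lm.
have lj : l != j by rewrite eq_sym. have lk : l != k by rewrite eq_sym.
have mj : m != j by rewrite eq_sym. have mk : m != k by rewrite eq_sym.
have GE : [fset t in F | dotp (cneg m) t == 0] = S2 x y.
  apply/fsetP => t; rewrite in_filt cneg_eq0 (trip_F T) inS3 inS2.
  case: (eqVneq t x) => [->|tx]; first by rewrite xm eqxx.
  case: (eqVneq t y) => [->|ty]; first by rewrite ym eqxx.
  case: (eqVneq t z) => [->|tz] //=; by rewrite (negbTE zm).
case: (T) => _ _ zF [_ xz yz].
apply: (internal (G := [fset t in F | dotp (cneg m) t == 0])).
- exact: (face_lemma (cneg_le0 m)).1.
- by rewrite GE; apply/eqP => /fsetP /(_ x); rewrite inS2 eqxx inE.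
- rewrite GE; apply/eqP => /fsetP /(_ z); rewrite inS2 zF.
  by rewrite eq_sym (negbTE xz) eq_sym (negbTE yz).
- split; first exact: (face_lemma (cneg_le0 m)).2.
  exists 1%N; rewrite GE; split; first exact: hd2.
  exists [set j; k]; split; first by rewrite cards2 jk.
  move=> t; rewrite inS2 => /orP[] /eqP -> i; rewrite !inE negb_or => /andP[ij ik];
    have := four_cover i lm lj lk mj mk jk; rewrite (negbTE ij) (negbTE ik) !orbF;
    case/orP => /eqP ->; rewrite ?Fl //.
Qed.

Lemma I1 x m m' : x \in F -> m != l -> m' != l -> m != m' -> x m = 0%N -> x m' = 0%N -> False.
Proof.
move=> xF ml m'l mm' xm xm'.
have [y [z T]] := others xF.
case: (T) => _ yF zF [xy xz yz].
have ym : y m != 0%N by apply/negP => /eqP ym; apply: (I2 xF yF xy ml xm ym).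
have zm : z m != 0%N by apply/negP => /eqP zm; apply: (I2 xF zF xz ml xm zm).
have lm : l != m by rewrite eq_sym. have lm' : l != m' by rewrite eq_sym.
have [k [kl km km']] := one_other lm lm' mm'.
have lk : l != k by rewrite eq_sym. have mk : m != k by rewrite eq_sym.
have m'k : m' != k by rewrite eq_sym.
have GE : [fset t in F | dotp (cneg2 m m') t == 0] = [fset x].
  apply/fsetP => t; rewrite in_filt cneg2_eq0 (trip_F T) inS3 inE.
  case: (eqVneq t x) => [->|tx]; first by rewrite xm xm' eqxx.
  case: (eqVneq t y) => [->|ty]; first by rewrite (negbTE ym).
  case: (eqVneq t z) => [->|tz] //=; by rewrite (negbTE zm).
apply: (internal (G := [fset t in F | dotp (cneg2 m m') t == 0])).
- exact: (face_lemma (cneg2_le0 m m')).1.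
- by rewrite GE; apply/eqP => /fsetP /(_ x); rewrite !inE eqxx.
- rewrite GE; apply/eqP => /fsetP /(_ y); rewrite yF inE.
  by rewrite eq_sym (negbTE xy).
- split; first exact: (face_lemma (cneg2_le0 m m')).2.
  exists 0%N; rewrite GE; split; first exact: hd1.
  exists [set k]; split; first by rewrite cards1.
  move=> t; rewrite inE => /eqP -> i; rewrite !inE => ik.
  have := four_cover i lm lm' lk mm' mk m'k; rewrite (negbTE ik) !orbF.
  by case/or3P => /eqP ->; rewrite ?Fl.
Qed.

Definition el : pt 4 := [ffun i => nat_of_bool (i == l)].
Lemma crd_el i : crd el i = (i == l)%:R. Proof. by rewrite /Defs.coord ffunE. Qed.

Lemma dot_lin4 (c : 'I_4 -> R) (l1 l2 l3 l4 : R) x1 x2 x3 x4 :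
  \sum_(i < 4) c i * (l1 * crd x1 i + l2 * crd x2 i + l3 * crd x3 i + l4 * crd x4 i) =
  l1 * dotp c x1 + l2 * dotp c x2 + l3 * dotp c x3 + l4 * dotp c x4.
Proof. by rewrite /dotp !mulr_sumr -!big_split; apply: eq_bigr => i _ /=; ring. Qed.

Lemma T1 q : q \in tau -> q l = 0%N -> q \in F.
Proof.
move=> qt ql.
pose M : 'M[R]_4 := \matrix_(r < 4, c < 4) crd (nth el [:: u; v; w; el] r) c.
have O01 : O0 != O1 by []. have O02 : O0 != O2 by []. have O03 : O0 != O3 by [].
have O12 : O1 != O2 by []. have O13 : O1 != O3 by []. have O23 : O2 != O3 by [].
have Mx : forall (x : 'rV[R]_4) c, (x *m M) 0 c =
    x 0 O0 * crd u c + x 0 O1 * crd v c + x 0 O2 * crd w c + x 0 O3 * crd el c.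
  by move=> x c; rewrite !mxE (sum4 _ O01 O02 O03 O12 O13 O23) !mxE.
have bn : b != 0 by apply: lt0r_neq0; exact: bpos.
have H : forall x : 'rV[R]_4, x *m M = 0 -> x = 0.
  move=> x Hx.
  have E : forall c, x 0 O0 * crd u c + x 0 O1 * crd v c + x 0 O2 * crd w c + x 0 O3 * crd el c = 0.
    by move=> c; rewrite -Mx Hx mxE.
  have l4 : x 0 O3 = 0.
    have := E l; rewrite (cl uF) (cl vF) (cl wF) crd_el eqxx.
    by rewrite !mulr0 !add0r mulr1.
  have D := dot_lin4 a (x 0 O0) (x 0 O1) (x 0 O2) (x 0 O3) u v w el.
  rewrite (eq_bigr (fun=> 0)) ?big1_eq in D; last by move=> c _; rewrite E mulr0.
  rewrite (onH (F_tau uF)) (onH (F_tau vF)) (onH (F_tau wF)) l4 mul0r addr0 in D.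
  have s0 : x 0 O0 + x 0 O1 + x 0 O2 = 0.
    have : (x 0 O0 + x 0 O1 + x 0 O2) * b = 0 by rewrite D; ring.
    by move/eqP; rewrite mulf_eq0 (negbTE bn) orbF => /eqP.
  have Hc : forall c, x 0 O0 * crd u c + x 0 O1 * crd v c + x 0 O2 * crd w c = 0.
    by move=> c; rewrite -(E c) l4 mul0r addr0.
  have [h1 h2 h3] := ai3F trip_uvw s0 Hc.
  apply/rowP => c; rewrite [RHS]mxE.
  have := four_cover c O01 O02 O03 O12 O13 O23; case/or4P => /eqP -> //.
have [x Ex] := span4 H (\row_c crd q c).
have E' : forall c, crd q c =
    x 0 O0 * crd u c + x 0 O1 * crd v c + x 0 O2 * crd w c + x 0 O3 * crd el c.
  by move=> c; rewrite -Mx -Ex mxE.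
have l4 : x 0 O3 = 0.
  have := E' l; rewrite (cl uF) (cl vF) (cl wF) crd_el eqxx /Defs.coord ql.
  by rewrite !mulr0 !add0r mulr1.
have Dq : forall c0, dotp c0 q = \sum_(i < 4) c0 i *
    (x 0 O0 * crd u i + x 0 O1 * crd v i + x 0 O2 * crd w i + x 0 O3 * crd el i).
  by move=> c0; apply: eq_bigr => i _; rewrite E'.
have s1 : x 0 O0 + x 0 O1 + x 0 O2 = 1.
  have := Dq a; rewrite dot_lin4 (onH (F_tau uF)) (onH (F_tau vF)) (onH (F_tau wF)) l4 mul0r addr0.
  rewrite (onH qt) => e; have : (x 0 O0 + x 0 O1 + x 0 O2 - 1) * b = 0 by lra.
  by move/eqP; rewrite mulf_eq0 (negbTE bn) orbF subr_eq0 => /eqP.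
rewrite memF qt /=; apply/eqP.
rewrite Dq dot_lin4 (F_dot uF) (F_dot vF) (F_dot wF) l4 mul0r addr0.
by rewrite -!mulrDl s1 mul1r.
Qed.

Lemma exists_P : exists p, p \in tau /\ p l != 0%N.
Proof.
apply: NNPP => H.
have H' : forall t, t \in tau -> t l = 0%N.
  move=> t tt; apply/eqP; apply: contraT => tl; exfalso; apply: H; by exists t.
pose y : 'I_4 -> R := fun i => if i == l then b / a l else 0.
have aln : a l != 0 by apply: lt0r_neq0.
have : \sum_(j < 4) a j * y j = b.
  rewrite (bigD1 l) //= big1 => [|i /negbTE il]; last by rewrite /y il mulr0.
  by rewrite /y eqxx addr0; field.
move/hyp => [lam [_ Hl]].
have := Hl l; rewrite /y eqxx big1_fset => [|t tt _]; last by rewrite /Defs.coord H' ?mulr0.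
move/eqP; rewrite mulf_eq0 invr_eq0 (negbTE (lt0r_neq0 bpos)) (negbTE aln).
done.
Qed.

Lemma notF_l p : p \in tau -> p \notin F -> p l != 0%N.
Proof. by move=> pt pF; apply/negP => /eqP pl; move/negP: pF; apply; exact: T1. Qed.

Lemma notF_ne p x : p \notin F -> x \in F -> p != x.
Proof. by move=> pF xF; apply: contraNneq pF => ->. Qed.

Lemma P_l1 p : p \in tau -> p \notin F -> p l = 1%N.
Proof.
move=> pt pF.
have pl := notF_l pt pF.
have up : u != p by rewrite eq_sym; exact: notF_ne pF uF.
have vp : v != p by rewrite eq_sym; exact: notF_ne pF vF.
have wp : w != p by rewrite eq_sym; exact: notF_ne pF wF.
have sub : S4 u v w p `<=` tau.
  apply/fsubsetP => t; rewrite inS4 => /or4P[] /eqP-> //; apply: F_tau;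
    [exact: uF | exact: vF | exact: wF].
have sim : simplex R (S4 u v w p) 3.
  split; last exact: card_S4.
  apply: ai4I => // l1 l2 l3 l4 Hs Hc.
  have l40 : l4 = 0.
    have := Hc l; rewrite (cl uF) (cl vF) (cl wF) !mulr0 !add0r => /eqP.
    by rewrite mulf_eq0 crd_eq0 (negbTE pl) orbF => /eqP.
  have Hs' : l1 + l2 + l3 = 0 by rewrite -Hs l40 addr0.
  have Hc' : forall i, l1 * crd u i + l2 * crd v i + l3 * crd w i = 0.
    by move=> i; rewrite -(Hc i) l40 mul0r addr0.
  by have [h1 h2 h3] := ai3F trip_uvw Hs' Hc'.
have [_ [i [cnt one]]] := SC sub sim.
rewrite card_filt4 // in cnt.
case: (eqVneq i l) => [il|il].
  by subst i; apply: one => //; rewrite inS4 eqxx !orbT.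
exfalso.
move: cnt; case Hu: (u i == 0%N); case Hv: (v i == 0%N); case Hw: (w i == 0%N);
  case: (p i == 0%N) => //= _.
all: first [ exact: (I2 uF vF uv il (eqP Hu) (eqP Hv))
           | exact: (I2 uF wF uw il (eqP Hu) (eqP Hw))
           | exact: (I2 vF wF vw il (eqP Hv) (eqP Hw)) ].
Qed.

Lemma rigid s t m m' : s \in tau -> t \in tau -> s l = 1%N -> t l = 1%N -> m != m' ->
  m != l -> m' != l -> s m = 0%N -> s m' = 0%N -> t m = 0%N -> t m' = 0%N -> s = t.
Proof.
move=> st tt sl tl mm' ml m'l sm sm' tm tm'.
have lm : l != m by rewrite eq_sym. have lm' : l != m' by rewrite eq_sym.
have [k [kl km km']] := one_other lm lm' mm'.
have lk : l != k by rewrite eq_sym. have mk : m != k by rewrite eq_sym.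
have m'k : m' != k by rewrite eq_sym.
have Es : a l + a k * crd s k = b.
  rewrite -(onH st) /dotp (sum4 _ lm lm' lk mm' mk m'k).
  by rewrite (crd_val _ sl) (crd_val _ sm) (crd_val _ sm'); ring.
have Et : a l + a k * crd t k = b.
  rewrite -(onH tt) /dotp (sum4 _ lm lm' lk mm' mk m'k).
  by rewrite (crd_val _ tl) (crd_val _ tm) (crd_val _ tm'); ring.
have akn : a k != 0 by apply: lt0r_neq0.
have ek : crd s k = crd t k.
  apply: (mulfI akn); lra.
apply/(@crd_inj R) => i.
have := four_cover i lm lm' lk mm' mk m'k; case/or4P => /eqP -> //.
- by rewrite (crd_val _ sl) (crd_val _ tl).
- by rewrite (crd_val _ sm) (crd_val _ tm).
- by rewrite (crd_val _ sm') (crd_val _ tm').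
Qed.

Lemma edge_B x y p q : x \in F -> y \in F -> x != y -> p \in tau -> q \in tau ->
  p \notin F -> q \notin F -> p != q -> aff_indep R (S4 x y p q) ->
  exists i, [/\ i != l, p i = 0%N, q i = 0%N &
    (x i = 0%N /\ y i = 1%N) \/ (x i = 1%N /\ y i = 0%N)].
Proof.
move=> xF yF xy pt qt pF qF pq ai.
have xp : x != p by rewrite eq_sym; exact: notF_ne pF xF.
have xq : x != q by rewrite eq_sym; exact: notF_ne qF xF.
have yp : y != p by rewrite eq_sym; exact: notF_ne pF yF.
have yq : y != q by rewrite eq_sym; exact: notF_ne qF yF.
have sub : S4 x y p q `<=` tau.
  apply/fsubsetP => t; rewrite inS4 => /or4P[] /eqP-> //; apply: F_tau => //.
have sim : simplex R (S4 x y p q) 3 by split => //; exact: card_S4.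
have [_ [i [cnt one]]] := SC sub sim.
rewrite card_filt4 // in cnt.
have pl := P_l1 pt pF; have ql := P_l1 qt qF.
case: (eqVneq i l) => [il|il].
  by move: cnt; rewrite il (Fl xF) (Fl yF) pl ql.
have nxy : ~~ ((x i == 0%N) && (y i == 0%N)).
  by apply/negP => /andP[/eqP a1 /eqP a2]; exact: (I2 xF yF xy il a1 a2).
move: cnt nxy; case Hx: (x i == 0%N); case Hy: (y i == 0%N); case Hp: (p i == 0%N);
  case Hq: (q i == 0%N) => //= _ _.
- exists i; split => //; [exact/eqP | exact/eqP | left; split; first exact/eqP].
  by apply: one; rewrite ?inS4 ?eqxx ?orbT ?Hy.
- exists i; split => //; [exact/eqP | exact/eqP | right; split; last exact/eqP].
  by apply: one; rewrite ?inS4 ?eqxx ?orbT ?Hx.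
Qed.

Lemma dep_or x y p q : x \in F -> y \in F -> x != y -> p \in tau -> q \in tau ->
  p \notin F -> q \notin F -> p != q ->
  aff_indep R (S4 x y p q) \/
  exists t : R, t != 0 /\ forall i, crd p i - crd q i = t * (crd x i - crd y i).
Proof.
move=> xF yF xy pt qt pF qF pq.
case: (classic (exists t : R, t != 0 /\
   forall i, crd p i - crd q i = t * (crd x i - crd y i))) => [|nE]; first by right.
left.
have xp : x != p by rewrite eq_sym; exact: notF_ne pF xF.
have xq : x != q by rewrite eq_sym; exact: notF_ne qF xF.
have yp : y != p by rewrite eq_sym; exact: notF_ne pF yF.
have yq : y != q by rewrite eq_sym; exact: notF_ne qF yF.
apply: ai4I => // l1 l2 l3 l4 Hs Hc.
have pl := P_l1 pt pF; have ql := P_l1 qt qF.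
have e34 : l3 + l4 = 0.
  have := Hc l; rewrite (cl xF) (cl yF) (crd_val _ pl) (crd_val _ ql).
  by rewrite !mulr0 !add0r !mulr1.
have e12 : l1 + l2 = 0 by lra.
have E : forall i, l1 * (crd x i - crd y i) + l3 * (crd p i - crd q i) = 0.
  move=> i; have := Hc i.
  have -> : l2 = - l1 by lra.
  have -> : l4 = - l3 by lra.
  by move=> <-; ring.
case: (eqVneq l3 0) => [l30|l3n].
  have l10 : l1 = 0.
    have [i Hi] := crd_neq R xy.
    have := E i; rewrite l30 mul0r addr0 => /eqP.
    by rewrite mulf_eq0 subr_eq0 (negbTE Hi) orbF => /eqP.
  split; lra.
exfalso; apply: nE; exists (- l1 / l3); split.
  apply/negP => /eqP t0.
  have l10 : l1 = 0.
    by move/eqP: t0; rewrite mulf_eq0 invr_eq0 (negbTE l3n) orbF oppr_eq0 => /eqP.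
  move/negP: pq; apply; apply/eqP/(@crd_inj R) => i.
  have := E i; rewrite l10 mul0r add0r => /eqP.
  by rewrite mulf_eq0 (negbTE l3n) /= subr_eq0 => /eqP.
move=> i; have Ei := E i.
have -> : crd p i - crd q i = (l3 * (crd p i - crd q i)) / l3 by field.
have -> : l3 * (crd p i - crd q i) = - (l1 * (crd x i - crd y i)).
  by apply/eqP; rewrite -subr_eq0 opprK addrC Ei.
by field.
Qed.

Lemma two_par x y z (D : 'I_4 -> R) t s : trip x y z -> t != 0 ->
  (forall i, D i = t * (crd x i - crd y i)) -> (forall i, D i = s * (crd x i - crd z i)) -> False.
Proof.
move=> T tn H1 H2.
have Hs : (t - s) + (- t) + s = 0 by ring.
have Hc : forall i, (t - s) * crd x i + (- t) * crd y i + s * crd z i = 0.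
  move=> i; have e : t * (crd x i - crd y i) = s * (crd x i - crd z i) by rewrite -H1 -H2.
  have -> : (t - s) * crd x i + (- t) * crd y i + s * crd z i =
     t * (crd x i - crd y i) - s * (crd x i - crd z i) by ring.
  by rewrite e subrr.
have [_ h2 _] := ai3F T Hs Hc.
by move: tn; rewrite -oppr_eq0 h2 eqxx.
Qed.

Definition good i := [&& (u i <= 1)%N, (v i <= 1)%N, (w i <= 1)%N &
  [|| u i == 0%N, v i == 0%N | w i == 0%N]].

Lemma goodI i : (forall t, t \in F -> (t i <= 1)%N) -> (exists2 t, t \in F & t i = 0%N) -> good i.
Proof.
move=> H [t tF t0]; rewrite /good !H ?uF ?vF ?wF //=.
by move: tF t0; rewrite inS3 => /or3P[] /eqP -> ->; rewrite eqxx ?orbT.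
Qed.

Lemma goodE i t : good i -> t \in F -> (t i <= 1)%N.
Proof. by case/and4P => h1 h2 h3 _; rewrite inS3 => /or3P[] /eqP ->. Qed.

Lemma PL_edge x y z p q : trip x y z -> p \in tau -> q \in tau -> p \notin F -> q \notin F ->
  p != q -> aff_indep R (S4 x y p q) -> aff_indep R (S4 x z p q) ->
  exists i, [/\ i != l, p i = 0%N, q i = 0%N & good i].
Proof.
move=> T pt qt pF qF pq a1 a2.
case: (T) => xF yF zF [xy xz yz].
have [i1 [i1l p1 q1 H1]] := edge_B xF yF xy pt qt pF qF pq a1.
have [i2 [i2l p2 q2 H2]] := edge_B xF zF xz pt qt pF qF pq a2.
have pl := P_l1 pt pF; have ql := P_l1 qt qF.
case: (eqVneq i1 i2) => [e|ne]; last first.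
  by exfalso; move/negP: pq; apply; apply/eqP; apply: (rigid pt qt pl ql ne i1l i2l p1 p2 q1 q2).
subst i2; exists i1; split => //.
case: H1 => [[x0 y1]|[x1 y0]].
  case: H2 => [[_ z1]|[x1 _]]; last by rewrite x0 in x1.
  apply: goodI; last by exists x.
  by move=> t; rewrite (trip_F T) inS3 => /or3P[] /eqP ->; rewrite ?x0 ?y1 ?z1.
case: H2 => [[x0 _]|[_ z0]]; first by rewrite x0 in x1.
by exfalso; exact: (I2 yF zF yz i1l y0 z0).
Qed.

Lemma PL p q : p \in tau -> q \in tau -> p \notin F -> q \notin F -> p != q ->
  exists i, [/\ i != l, p i = 0%N, q i = 0%N & good i].
Proof.
move=> pt qt pF qF pq.
have T1' := trip_uvw.
have Tvuw : trip v u w := trip_sym12 T1'.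
have Twuv : trip w u v := trip_sym12 (trip_sym23 T1').
have D1 := dep_or uF vF uv pt qt pF qF pq.
have D2 := dep_or uF wF uw pt qt pF qF pq.
have D3 := dep_or vF wF vw pt qt pF qF pq.
case: D1 => [A1|[t1 [t1n E1]]].
- case: D2 => [A2|[t2 [t2n E2]]].
  + exact: (PL_edge T1' pt qt pF qF pq A1 A2).
  + case: D3 => [A3|[t3 [t3n E3]]].
    * by apply: (PL_edge Tvuw pt qt pF qF pq) => //; rewrite S4_swap.
    * exfalso; apply: (@two_par w u v (fun i => crd p i - crd q i) (- t2) (- t3) Twuv).
      -- by rewrite oppr_eq0.
      -- by move=> i /=; rewrite E2; ring.
      -- by move=> i /=; rewrite E3; ring.
- case: D2 => [A2|[t2 [t2n E2]]]; last first.
    by exfalso; apply: (@two_par u v w (fun i => crd p i - crd q i) t1 t2 T1' t1n).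
  case: D3 => [A3|[t3 [t3n E3]]].
  + by apply: (PL_edge Twuv pt qt pF qF pq); rewrite S4_swap.
  + exfalso; apply: (@two_par v u w (fun i => crd p i - crd q i) (- t1) t3 Tvuw).
    * by rewrite oppr_eq0.
    * by move=> i /=; rewrite E1; ring.
    * by move=> i /=; rewrite E3.
Qed.

Lemma goodZ m : good m -> exists2 z, z \in F & z m = 0%N.
Proof.
case/and4P => _ _ _ /or3P[] /eqP H; [exists u | exists v | exists w] => //;
  [exact: uF | exact: vF | exact: wF].
Qed.

Lemma val1 z m : good m -> z \in F -> z m != 0%N -> z m = 1%N.
Proof. by move=> g zF; have := goodE g zF; case: (z m) => [|[|?]]. Qed.

Lemma cross_case p q r i j j' : p \in tau -> q \in tau -> r \in tau ->
  p \notin F -> q \notin F -> r \notin F -> p != q -> p != r -> q != r ->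
  i != j -> i != j' -> j != j' -> i != l -> j != l -> j' != l ->
  good i -> good j -> good j' ->
  p i = 0%N -> q i = 0%N -> p j = 0%N -> r j = 0%N -> q j' = 0%N -> r j' = 0%N ->
  tau = cross_polytope.
Proof.
move=> pt qt rt pF qF rF pq pr qr ij ij' jj' il jl j'l gi gj gj' pi qi pj rj qj' rj'.
have ji : j != i by rewrite eq_sym. have j'i : j' != i by rewrite eq_sym.
have j'j : j' != j by rewrite eq_sym.
have pl := P_l1 pt pF; have ql := P_l1 qt qF; have rl := P_l1 rt rF.
have [zi ziF zii] := goodZ gi.
have [zj zjF zjj] := goodZ gj.
have [zk zkF zkk] := goodZ gj'.
have nz : forall z m m', z \in F -> m != l -> m' != l -> m != m' -> z m = 0%N -> z m' != 0%N.
  by move=> z m m' zF ml m'l mm' zm; apply/negP => /eqP zm'; exact: (I1 zF ml m'l mm' zm zm').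
have zij := val1 gj ziF (nz _ _ _ ziF il jl ij zii).
have zik := val1 gj' ziF (nz _ _ _ ziF il j'l ij' zii).
have zji := val1 gi zjF (nz _ _ _ zjF jl il ji zjj).
have zjk := val1 gj' zjF (nz _ _ _ zjF jl j'l jj' zjj).
have zki := val1 gi zkF (nz _ _ _ zkF j'l il j'i zkk).
have zkj := val1 gj zkF (nz _ _ _ zkF j'l jl j'j zkk).
have zil := Fl ziF; have zjl := Fl zjF; have zkl := Fl zkF.
have dzij : zi != zj by apply/negP => /eqP e; move: zij; rewrite e zjj.
have dzik : zi != zk by apply/negP => /eqP e; move: zik; rewrite e zkk.
have dzjk : zj != zk by apply/negP => /eqP e; move: zjk; rewrite e zkk.
have T : trip zi zj zk by split => //; split.
have sumE : forall x, x \in tau -> dotp a x = a i * crd x i + a j * crd x j + a j' * crd x j' + a l * crd x l.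
  by move=> x _; rewrite /dotp (sum4 _ ij ij' il jj' jl j'l).
have ea1 : a j + a j' = b.
  rewrite -(onH (F_tau ziF)) sumE ?F_tau //.
  by rewrite (crd_val _ zii) (crd_val _ zij) (crd_val _ zik) (crd_val _ zil); ring.
have ea2 : a i + a j' = b.
  rewrite -(onH (F_tau zjF)) sumE ?F_tau //.
  by rewrite (crd_val _ zji) (crd_val _ zjj) (crd_val _ zjk) (crd_val _ zjl); ring.
have ea3 : a i + a j = b.
  rewrite -(onH (F_tau zkF)) sumE ?F_tau //.
  by rewrite (crd_val _ zki) (crd_val _ zkj) (crd_val _ zkk) (crd_val _ zkl); ring.
have ep : a j' * crd p j' + a l = b.
  rewrite -(onH pt) sumE //.
  by rewrite (crd_val _ pi) (crd_val _ pj) (crd_val _ pl); ring.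
have eq' : a j * crd q j + a l = b.
  rewrite -(onH qt) sumE //.
  by rewrite (crd_val _ qi) (crd_val _ qj') (crd_val _ ql); ring.
have er : a i * crd r i + a l = b.
  rewrite -(onH rt) sumE //.
  by rewrite (crd_val _ rj) (crd_val _ rj') (crd_val _ rl); ring.
have ain : a i != 0 by apply: lt0r_neq0.
have e2 : a j = a i by lra.
have e3 : a j' = a i by lra.
have cpq : crd q j = crd p j'.
  by apply: (mulfI ain); rewrite e2 in eq'; rewrite e3 in ep; lra.
have cpr : crd r i = crd p j'.
  by apply: (mulfI ain); rewrite e3 in ep; lra.
have cpn : crd p j' != 0.
  rewrite crd_eq0; apply/negP => /eqP pj'.
  by move/negP: pq; apply; apply/eqP; apply: (rigid pt qt pl ql ij' il j'l pi pj' qi qj').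
have zp : zi != p by rewrite eq_sym; exact: notF_ne pF ziF.
have zq : zi != q by rewrite eq_sym; exact: notF_ne qF ziF.
have zr : zi != r by rewrite eq_sym; exact: notF_ne rF ziF.
have sub : S4 zi p q r `<=` tau.
  apply/fsubsetP => t; rewrite inS4 => /or4P[] /eqP-> //; exact: F_tau.
have sim : simplex R (S4 zi p q r) 3.
  split; last exact: card_S4.
  apply: ai4I => // l1 l2 l3 l4 Hs Hc.
  have Hi := Hc i; have Hj := Hc j; have Hk := Hc j'; have Hl := Hc l.
  rewrite (crd_val _ zii) (crd_val _ pi) (crd_val _ qi) cpr !mulr0 !add0r in Hi.
  rewrite (crd_val _ zij) (crd_val _ pj) (crd_val _ rj) cpq !mulr0 !addr0 mulr1 in Hj.
  rewrite (crd_val _ zik) (crd_val _ qj') (crd_val _ rj') !mulr0 !addr0 mulr1 in Hk.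
  rewrite (crd_val _ zil) (crd_val _ pl) (crd_val _ ql) (crd_val _ rl) mulr0 add0r !mulr1 in Hl.
  have l40 : l4 = 0 by move/eqP: Hi; rewrite mulf_eq0 (negbTE cpn) orbF => /eqP.
  have l10 : l1 = 0 by lra.
  rewrite l10 add0r in Hj Hk.
  have l30 : l3 = 0 by move/eqP: Hj; rewrite mulf_eq0 (negbTE cpn) orbF => /eqP.
  have l20 : l2 = 0 by move: Hk; rewrite add0r => /eqP; rewrite mulf_eq0 (negbTE cpn) orbF => /eqP.
  by [].
have [_ [m [cnt one]]] := SC sub sim.
rewrite card_filt4 // in cnt.
have qjn : q j != 0%N by rewrite -(crd_eq0 R) cpq.
have pkn : p j' != 0%N by rewrite -(crd_eq0 R) cpn.
have rin : r i != 0%N by rewrite -(crd_eq0 R) cpr.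
have ri1 : r i = 1%N.
  have := four_cover m ij ij' il jj' jl j'l; case/or4P => /eqP em; subst m.
  - by apply: one => //; rewrite inS4 eqxx !orbT.
  - by move: cnt; rewrite zij pj rj (negbTE qjn).
  - by move: cnt; rewrite zik qj' rj' (negbTE pkn).
  - by move: cnt; rewrite zil pl ql rl.
have c1 : crd p j' = 1 by rewrite -cpr (crd_val _ ri1).
have pk1 : p j' = 1%N by apply: (crd_nat (R := R)); rewrite c1.
have qj1 : q j = 1%N by apply: (crd_nat (R := R)); rewrite cpq c1.
have PQR : forall t, t \in tau -> t \notin F -> [|| t == p, t == q | t == r].
  move=> t tt tF; apply/negPn/negP; rewrite !negb_or => /and3P[tp tq tr].
  have tl := P_l1 tt tF.
  have [m1 [m1l t1 p1 _]] := PL tt pt tF pF tp.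
  have [m2 [m2l t2 q2 _]] := PL tt qt tF qF tq.
  have [m3 [m3l t3 r3 _]] := PL tt rt tF rF tr.
  have C1 : (m1 == i) || (m1 == j).
    have := four_cover m1 ij ij' il jj' jl j'l; case/or4P => /eqP e; subst m1;
      [by rewrite eqxx | by rewrite eqxx orbT | by rewrite pk1 in p1 | by rewrite pl in p1].
  have C2 : (m2 == i) || (m2 == j').
    have := four_cover m2 ij ij' il jj' jl j'l; case/or4P => /eqP e; subst m2;
      [by rewrite eqxx | by rewrite qj1 in q2 | by rewrite eqxx orbT | by rewrite ql in q2].
  have C3 : (m3 == j) || (m3 == j').
    have := four_cover m3 ij ij' il jj' jl j'l; case/or4P => /eqP e; subst m3;
      [by rewrite ri1 in r3 | by rewrite eqxx | by rewrite eqxx orbT | by rewrite rl in r3].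
  case/orP: C1 => /eqP f1; subst m1.
  - case/orP: C3 => /eqP f3; subst m3.
    + by move/negP: tp; apply; apply/eqP; exact: (rigid tt pt tl pl ij il jl t1 t3 pi pj).
    + by move/negP: tq; apply; apply/eqP; exact: (rigid tt qt tl ql ij' il j'l t1 t3 qi qj').
  - case/orP: C2 => /eqP f2; subst m2.
    + by move/negP: tp; apply; apply/eqP; exact: (rigid tt pt tl pl ij il jl t2 t1 pi pj).
    + by move/negP: tr; apply; apply/eqP; exact: (rigid tt rt tl rl jj' jl j'l t1 t2 rj rj').
have sub2 : tau `<=` cross_polytope.
  apply/fsubsetP => t tt.
  case: (boolP (t \in F)) => tF.
    move: tF; rewrite (trip_F T) inS3 => /or3P[] /eqP ->.
    - by apply: (cross_mem ij ij' il jj' jl j'l); rewrite ?zii ?zij ?zik ?zil.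
    - by apply: (cross_mem ij ij' il jj' jl j'l); rewrite ?zji ?zjj ?zjk ?zjl.
    - by apply: (cross_mem ij ij' il jj' jl j'l); rewrite ?zki ?zkj ?zkk ?zkl.
  case/or3P: (PQR t tt tF) => /eqP ->.
  - by apply: (cross_mem ij ij' il jj' jl j'l); rewrite ?pi ?pj ?pk1 ?pl.
  - by apply: (cross_mem ij ij' il jj' jl j'l); rewrite ?qi ?qj1 ?qj' ?ql.
  - by apply: (cross_mem ij ij' il jj' jl j'l); rewrite ?ri1 ?rj ?rj' ?rl.
have zjp : zj != p by rewrite eq_sym; exact: notF_ne pF zjF.
have zjq : zj != q by rewrite eq_sym; exact: notF_ne qF zjF.
have zjr : zj != r by rewrite eq_sym; exact: notF_ne rF zjF.
have zkp : zk != p by rewrite eq_sym; exact: notF_ne pF zkF.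
have zkq : zk != q by rewrite eq_sym; exact: notF_ne qF zkF.
have zkr : zk != r by rewrite eq_sym; exact: notF_ne rF zkF.
pose X := zi |` (zj |` (zk |` (p |` (q |` [fset r])))).
have subX : X `<=` tau.
  apply/fsubsetP => t; rewrite !inE => /or4P[/eqP->|/eqP->|/eqP->|/orP[/eqP->|/orP[/eqP->|/eqP->]]] //;
    exact: F_tau.
have cX : #|` X| = 6%N.
  rewrite /X !cardfsU1 cardfs1 !inE.
  by rewrite (negbTE dzij) (negbTE dzik) (negbTE zp) (negbTE zq) (negbTE zr) (negbTE dzjk)
    (negbTE zjp) (negbTE zjq) (negbTE zjr) (negbTE zkp) (negbTE zkq) (negbTE zkr)
    (negbTE pq) (negbTE pr) (negbTE qr).
apply/eqP; rewrite eqEfcard sub2 /=.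
apply: leq_trans cross_card _.
by rewrite -cX; exact: fsubset_leq_card.
Qed.

Lemma main_sec : B1_facet tau \/ B2_facet tau \/ tau = cross_polytope.
Proof.
have [p [pt pl0]] := exists_P.
have pF : p \notin F by apply/negP => pF; move: pl0; rewrite (Fl pF).
case: (classic (exists q, [/\ q \in tau, q \notin F & q != p])) => [[q [qt qF qp]]|nq];
  last first.
  left; exists l; exists p => //; split; first exact: P_l1.
  move=> x xt xp; apply: Fl; apply: NNPP => xF; apply: nq; exists x; split => //.
  exact/negP.
have pq : p != q by rewrite eq_sym.
have [i [il pi qi gi]] := PL pt qt pF qF pq.
case: (classic (exists r, [/\ r \in tau, r \notin F & r i != 0%N])) => [[r [rt rF ri]]|nr];
  last first.
  right; left; exists i, l; split => // x xt.
  case: (boolP (x \in F)) => xF.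
    rewrite (Fl xF); have := goodE gi xF; case: (x i) => [|[|?]] //= _; by rewrite !inE.
  have xi : x i = 0%N.
    apply/eqP; apply: NNPP => H; apply: nr; exists x; split => //; exact/negP.
  by rewrite xi (P_l1 xt xF) !inE.
right; right.
have rp : r != p by apply: contraNneq ri => ->; rewrite pi.
have rq : r != q by apply: contraNneq ri => ->; rewrite qi.
have pr : p != r by rewrite eq_sym.
have qr : q != r by rewrite eq_sym.
have [j [jl pj rj gj]] := PL pt rt pF rF pr.
have [j' [j'l qj' rj' gj']] := PL qt rt qF rF qr.
have ij : i != j by apply: contraNneq ri => ->; rewrite rj.
have ij' : i != j' by apply: contraNneq ri => ->; rewrite rj'.
have jj' : j != j'.
  apply/negP => /eqP e; subst j'.
  by move/negP: pq; apply; apply/eqP; apply: (rigid pt qt (P_l1 pt pF) (P_l1 qt qF) ij il jl pi pj qi qj').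
exact: (cross_case pt qt rt pF qF rF pq pr qr ij ij' jj' il jl j'l gi gj gj' pi qi pj rj qj' rj').
Qed.

End Main.

Local Close Scope ring_scope.

Theorem lemma2p7 (R : realType) (tau : {fset pt 4}) :
  B_facet R tau ->
  (exists F : {fset pt 4},
      is_internal_Vface R tau F /\ #|` F| = 3 /\ aff_indep R F) ->
  B1_facet tau \/ B2_facet tau \/ tau = cross_polytope.
Proof.
move=> [[a [b [apos hyp]]] SC] [F [[[[cF [dF [cFle Feq]]] [k [hd [J [cJ JF]]]]] intF] [cF3 aiF]]].
have [u [v [w [EF uv uw vw]]]] := card3 cF3.
have k2 : k = 2%N.
  case: hd => [[B BF [_ cB]] hd2].
  have := hd2 F (fsubset_refl F) aiF; rewrite cF3 => h1.
  have := fsubset_leq_card BF; rewrite cB cF3 => h2.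
  by apply/eqP; rewrite eqn_leq -ltnS h2 -ltnS h1.
subst k.
have [l] : exists l, l \in ~: J.
  apply/card_gt0P; have h := cardsC J; rewrite cJ card_ord in h.
  by rewrite -(ltn_add2l 3) h.
rewrite inE => lJ.
move: Feq JF intF aiF; rewrite EF => Feq JF intF aiF.
apply: (main_sec apos hyp SC uv uw vw cFle Feq (l := l)).
- by move=> x xF; apply: JF.
- exact: aiF.
- exact: intF.
Qed.
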